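(* Let $\{\mathcal M_\omega\}_{\omega\in\Omega}$ be a family of $\mathcal L$-structures, $\mathbf M=\prod_{\omega\in\Omega}M_\omega$, and let $E$ be an integration functional on $\mathcal A=[0,1]^\Omega$. Let $(\widehat{\mathbf M},\widehat{\mathcal A})$ be the $\mathcal L^R$-structure associated to $(\mathbf M,\mathcal A)$ and $[\cdot]$ the canonical map. Then $(\mathbf M,\mathcal A)$ is full, and for every $\mathcal L$-formula $\varphi(\bar x)$ and every $\bar{\mathbf a}\in\mathbf M^n$: $\big[\langle\varphi(\bar{\mathbf a})\rangle\big]=[\![\varphi([\bar{\mathbf a}])]\!]$ (the right-hand side computed in $(\widehat{\mathbf M},\widehat{\mathcal A})$).
   Context: $\mathcal L$ is a (single-sorted) signature of continuous first-order logic. An integration functional on $\mathcal A=[0,1]^\Omega$ is $E\colon\mathcal A\to[0,1]$ with $E(1)=1$ and $E(X+Y)=E(X)+E(Y)$ whenever $X,Y,X+Y\in\mathcal A$. For $\bar{\mathbf a}\in\mathbf M^n$ and a formula $\varphi$, $\langle\varphi(\bar{\mathbf a})\rangle\in[0,1]^\Omega$ is $\omega\mapsto\varphi^{\mathcal M_\omega}(\bar{\mathbf a}(\omega))$. The randomisation signature $\mathcal L^R$ has a main sort carrying all function symbols of $\mathcal L$ (same continuity moduli), an auxiliary sort carrying $\{0,\neg,\tfrac12,\dotminus\}$, and for each predicate symbol $P$ of $\mathcal L$ a function symbol $[\![P]\!]$ from the main sort(s) to the auxiliary sort. $(\mathbf M,\mathcal A)$ is an $\mathcal L^R$-pre-structure: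 function symbols act pointwise on $\mathbf M$, $[\![P]\!](\bar{\mathbf a})=\langle P(\bar{\mathbf a})\rangle$, connectives act pointwise on $\mathcal A$ ($\neg X=1-X$, $\tfrac12X=X/2$, $X\dotminus Y=\max(X-Y,0)$), with pseudo-metrics $d(\mathbf a,\mathbf b)=E\langle d(\mathbf a,\mathbf b)\rangle$ and $d(X,Y)=E|X-Y|$. The associated structure $(\widehat{\mathbf M},\widehat{\mathcal A})$ is the completion of the quotient by distance zero; $[\cdot]$ is the canonical map, and $\widehat{\mathcal A}\cong L^1(\mathcal F,[0,1])$ for a probability space. $(\mathbf M,\mathcal A)$ is full if for all $\mathbf a,\mathbf b\in\mathbf M$, $X\in\mathcal A$ there is $\mathbf c\in\mathbf M$ with $\mathbf c(\omega)=\mathbf a(\omega)$ when $X(\omega)=1$ and $\mathbf c(\omega)=\mathbf b(\omega)$ when $X(\omega)=0$. In a structure with main sort $\mathbf N$ and auxiliary sort $L^1(\mathcal F,[0,1])$, $[\![\varphi]\!]$ is defined by induction: $[\![P(\bar\tau)]\!]=[\![P]\!](\bar\tau)$; $[\![\varphi\dotminus\psi]\!]=[\![\varphi]\!]\dotminus[\![\psi]\!]$, etc.; $[\![\inf_y\varphi(\bar x,y)]\!](\bar{\mathbf a})$ is the infimum in the complete lattice $L^1(\mathcal F,[0,1])$ of $\{[\![\varphi(\bar{\mathbf a},\mathbf b)]\!]:\mathbf b\in\mathbf N\}$, and similarly for $\sup$. *)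

(* Defs.v *)
From Stdlib Require Import Reals Lra.
From Coquelicot Require Import Rbar Lub.
Open Scope R_scope.

Definition fin (n : nat) := {i : nat | (i < n)%nat}.

Record Sig := {
  Fsym : Type;
  farity : Fsym -> nat;
  fmod : Fsym -> R -> R;
  fmod_pos : forall f eps, 0 < eps -> 0 < fmod f eps;
  Psym : Type;
  parity : Psym -> nat;
  pmod : Psym -> R -> R;
  pmod_pos : forall P eps, 0 < eps -> 0 < pmod P eps
}.

(** Terms (de Bruijn variables). *)
Inductive term (L : Sig) : Type :=
| Var : nat -> term L
| App : forall f : Fsym L, (fin (farity L f) -> term L) -> term L.
Arguments Var {L} _.
Arguments App {L} _ _.

(** Formulas: atomic P(t..), d(t1,t2) (d is the distinguished predicate),
    connectives 0, neg, 1/2, -., and quantifiers sup, inf (binding var 0). *)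
Inductive formula (L : Sig) : Type :=
| FPred : forall P : Psym L, (fin (parity L P) -> term L) -> formula L
| FDist : term L -> term L -> formula L
| FZero : formula L
| FNeg : formula L -> formula L
| FHalf : formula L -> formula L
| FMinus : formula L -> formula L -> formula L
| FSup : formula L -> formula L
| FInf : formula L -> formula L.
Arguments FPred {L} _ _.
Arguments FDist {L} _ _.
Arguments FZero {L}.
Arguments FNeg {L} _.
Arguments FHalf {L} _.
Arguments FMinus {L} _ _.
Arguments FSup {L} _.
Arguments FInf {L} _.

Definition scons {A : Type} (a : A) (e : nat -> A) : nat -> A :=
  fun k => match k with O => a | S k' => e k' end.

Record Struct (L : Sig) := {
  carrier :> Type;
  point : carrier;
  dist : carrier -> carrier -> R;
  dist_bounds : forall x y, 0 <= dist x y <= 1;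
  dist_refl : forall x, dist x x = 0;
  dist_sep : forall x y, dist x y = 0 -> x = y;
  dist_sym : forall x y, dist x y = dist y x;
  dist_tri : forall x y z, dist x z <= dist x y + dist y z;
  dist_complete : forall s : nat -> carrier,
    (forall eps, 0 < eps -> exists N, forall m n, (N <= m)%nat -> (N <= n)%nat ->
        dist (s m) (s n) < eps) ->
    exists x, forall eps, 0 < eps -> exists N, forall n, (N <= n)%nat -> dist (s n) x < eps;
  fint : forall f : Fsym L, (fin (farity L f) -> carrier) -> carrier;
  fint_uc : forall f eps (x y : fin (farity L f) -> carrier), 0 < eps ->
    (forall i, dist (x i) (y i) < fmod L f eps) -> dist (fint f x) (fint f y) <= eps;
  pint : forall P : Psym L, (fin (parity L P) -> carrier) -> R;
  pint_bounds : forall P x, 0 <= pint P x <= 1;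
  pint_uc : forall P eps (x y : fin (parity L P) -> carrier), 0 < eps ->
    (forall i, dist (x i) (y i) < pmod L P eps) -> Rabs (pint P x - pint P y) <= eps
}.
Arguments point {L} _.
Arguments dist {L} _ _ _.
Arguments fint {L} _ _ _.
Arguments pint {L} _ _ _.

Fixpoint teval {L : Sig} (S : Struct L) (e : nat -> S) (t : term L) : S :=
  match t with
  | Var k => e k
  | App f args => fint S f (fun i => teval S e (args i))
  end.

Fixpoint fval {L : Sig} (S : Struct L) (phi : formula L) (e : nat -> S) : R :=
  match phi with
  | FPred P args => pint S P (fun i => teval S e (args i))
  | FDist t1 t2 => dist S (teval S e t1) (teval S e t2)
  | FZero => 0
  | FNeg p => 1 - fval S p e
  | FHalf p => fval S p e / 2
  | FMinus p q => Rmax (fval S p e - fval S q e) 0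
  | FSup p => real (Lub_Rbar (fun r => exists b : S, r = fval S p (scons b e)))
  | FInf p => real (Glb_Rbar (fun r => exists b : S, r = fval S p (scons b e)))
  end.

Definition Prod {L : Sig} {Omega : Type} (M : Omega -> Struct L) : Type :=
  forall w : Omega, carrier L (M w).

Definition inA {Omega : Type} (X : Omega -> R) : Prop := forall w, 0 <= X w <= 1.

Definition integration_functional {Omega : Type} (E : (Omega -> R) -> R) : Prop :=
  (forall X, inA X -> 0 <= E X <= 1) /\
  E (fun _ => 1) = 1 /\
  (forall X Y, inA X -> inA Y -> inA (fun w => X w + Y w) ->
     E (fun w => X w + Y w) = E X + E Y).

Definition bracket {L : Sig} {Omega : Type} (M : Omega -> Struct L)
  (phi : formula L) (a : nat -> Prod M) : Omega -> R :=
  fun w => fval (M w) phi (fun k => a k w).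

Definition full {L : Sig} {Omega : Type} (M : Omega -> Struct L) : Prop :=
  forall (a b : Prod M) (X : Omega -> R), inA X ->
    exists c : Prod M, forall w,
      (X w = 1 -> c w = a w) /\ (X w = 0 -> c w = b w).

Definition dM {L : Sig} {Omega : Type} (M : Omega -> Struct L)
  (E : (Omega -> R) -> R) (a b : Prod M) : R :=
  E (fun w => dist (M w) (a w) (b w)).

(** The completion of the quotient is represented by Cauchy sequences
    (setoid style): an element of hat M is a Cauchy sequence in (M, dM). *)
Definition cauchyM {L : Sig} {Omega : Type} (M : Omega -> Struct L)
  (E : (Omega -> R) -> R) (s : nat -> Prod M) : Prop :=
  forall eps, 0 < eps -> exists N, forall m n, (N <= m)%nat -> (N <= n)%nat ->
    dM M E (s m) (s n) < eps.

(** An element of hat A: a Cauchy sequence in (A, d(X,Y) = E|X-Y|). *)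
Definition isAhat {Omega : Type} (E : (Omega -> R) -> R) (Z : nat -> Omega -> R) : Prop :=
  (forall n, inA (Z n)) /\
  (forall eps, 0 < eps -> exists N, forall m n, (N <= m)%nat -> (N <= n)%nat ->
     E (fun w => Rabs (Z m w - Z n w)) < eps).

(** Equality in hat A (distance zero in the limit). *)
Definition eqvA {Omega : Type} (E : (Omega -> R) -> R) (Z W : nat -> Omega -> R) : Prop :=
  forall eps, 0 < eps -> exists N, forall n, (N <= n)%nat ->
    E (fun w => Rabs (Z n w - W n w)) < eps.

(** Order in hat A: Z <= W iff Z -. W = 0 in hat A. *)
Definition leA {Omega : Type} (E : (Omega -> R) -> R) (Z W : nat -> Omega -> R) : Prop :=
  forall eps, 0 < eps -> exists N, forall n, (N <= n)%nat ->
    E (fun w => Rmax (Z n w - W n w) 0) < eps.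

(** [[phi]](e) = Z in the associated structure (hat M, hat A), where the
    environment e assigns to each variable k an element of hat M (the Cauchy
    sequence n |-> e k n) and Z represents an element of hat A. *)
Fixpoint Den {L : Sig} {Omega : Type} (M : Omega -> Struct L)
  (E : (Omega -> R) -> R) (phi : formula L) (e : nat -> nat -> Prod M)
  (Z : nat -> Omega -> R) : Prop :=
  match phi with
  | FPred P args =>
      isAhat E Z /\
      eqvA E Z (fun n w => pint (M w) P (fun i => teval (M w) (fun k => e k n w) (args i)))
  | FDist t1 t2 =>
      isAhat E Z /\
      eqvA E Z (fun n w => dist (M w) (teval (M w) (fun k => e k n w) t1)
                                      (teval (M w) (fun k => e k n w) t2))
  | FZero => isAhat E Z /\ eqvA E Z (fun _ _ => 0)
  | FNeg p => isAhat E Z /\ exists W, Den M E p e W /\ eqvA E Z (fun n w => 1 - W n w)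
  | FHalf p => isAhat E Z /\ exists W, Den M E p e W /\ eqvA E Z (fun n w => W n w / 2)
  | FMinus p q => isAhat E Z /\ exists W1 W2, Den M E p e W1 /\ Den M E q e W2 /\
      eqvA E Z (fun n w => Rmax (W1 n w - W2 n w) 0)
  | FSup p => isAhat E Z /\
      (forall b, cauchyM M E b -> exists W, Den M E p (scons b e) W) /\
      (forall b W, cauchyM M E b -> Den M E p (scons b e) W -> leA E W Z) /\
      (forall V, isAhat E V ->
         (forall b W, cauchyM M E b -> Den M E p (scons b e) W -> leA E W V) ->
         leA E Z V)
  | FInf p => isAhat E Z /\
      (forall b, cauchyM M E b -> exists W, Den M E p (scons b e) W) /\
      (forall b W, cauchyM M E b -> Den M E p (scons b e) W -> leA E Z W) /\
      (forall V, isAhat E V ->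
         (forall b W, cauchyM M E b -> Den M E p (scons b e) W -> leA E V W) ->
         leA E V Z)
  end.

(* Main.v *)
From Stdlib Require Import Reals Lra Lia List ClassicalEpsilon Classical FunctionalExtensionality ProofIrrelevance.
From Coquelicot Require Import Rbar Lub.
Require Import Defs.
Import ListNotations.
Open Scope R_scope.

Ltac solve_ineq := unfold Rmax, Rmin in *;
  repeat match goal with
  | |- context [Rle_dec ?a ?b] => destruct (Rle_dec a b)
  | H : context [Rle_dec ?a ?b] |- _ => destruct (Rle_dec a b)
  end; try split_Rabs; lra.

Lemma fin_up (n : nat) (Q : fin n -> nat -> Prop) :
  (forall i N N', Q i N -> (N <= N')%nat -> Q i N') ->
  (forall i, exists N, Q i N) -> exists N, forall i, Q i N.
Proof.
  intros Hm Hex.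
  assert (H : forall m, (m <= n)%nat -> exists N, forall i : fin n, (proj1_sig i < m)%nat -> Q i N).
  { induction m as [|m IH]; intros Hmn.
    - exists O. intros [x Hx] Hl. simpl in Hl. lia.
    - destruct (IH ltac:(lia)) as [N0 HN0].
      assert (Hm' : (m < n)%nat) by lia.
      destruct (Hex (exist _ m Hm')) as [N1 HN1].
      exists (Nat.max N0 N1). intros [x Hx] Hl. simpl in Hl.
      destruct (Nat.eq_dec x m) as [->|Hne].
      + replace Hx with Hm' by apply proof_irrelevance. eapply Hm; [exact HN1|lia].
      + eapply Hm; [apply (HN0 (exist _ x Hx)); simpl; lia|lia]. }
  destruct (H n (le_n n)) as [N HN]. exists N. intros i. apply HN. destruct i; simpl; lia.
Qed.

Lemma fin_down (n : nat) (P : fin n -> R -> Prop) :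
  (forall i d d', P i d -> 0 < d' <= d -> P i d') ->
  (forall i, exists d, 0 < d /\ P i d) -> exists d, 0 < d /\ forall i, P i d.
Proof.
  intros Hm Hex.
  assert (H : forall m, (m <= n)%nat -> exists d, 0 < d /\ forall i : fin n, (proj1_sig i < m)%nat -> P i d).
  { induction m as [|m IH]; intros Hmn.
    - exists 1. split; [lra|]. intros [x Hx] Hl. simpl in Hl. lia.
    - destruct (IH ltac:(lia)) as [d0 [Hd0 HN0]].
      assert (Hm' : (m < n)%nat) by lia.
      destruct (Hex (exist _ m Hm')) as [d1 [Hd1 HN1]].
      exists (Rmin d0 d1). split; [apply Rmin_glb_lt; lra|]. intros [x Hx] Hl. simpl in Hl.
      destruct (Nat.eq_dec x m) as [->|Hne].
      + replace Hx with Hm' by apply proof_irrelevance. eapply Hm; [exact HN1|].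
        split; [apply Rmin_glb_lt; lra| apply Rmin_r].
      + eapply Hm; [apply (HN0 (exist _ x Hx)); simpl; lia|].
        split; [apply Rmin_glb_lt; lra| apply Rmin_l]. }
  destruct (H n (le_n n)) as [d [Hd HN]]. exists d. split; auto. intros i. apply HN. destruct i; simpl; lia.
Qed.

Definition UCt {L : Sig} (t : term L) :=
  exists N, forall eps, 0 < eps -> exists delta, 0 < delta /\
    forall (S : Struct L) (e e' : nat -> S),
      (forall k, (k < N)%nat -> dist S (e k) (e' k) < delta) ->
      dist S (teval S e t) (teval S e' t) < eps.

Lemma UCt_all {L : Sig} (t : term L) : UCt t.
Proof.
  induction t as [k | f args IH].
  - exists (S k). intros eps Heps. exists eps. split; auto. intros S e e' H. simpl. apply H. lia.
  - destruct (fin_up _ (fun i N => forall eps, 0 < eps -> exists delta, 0 < delta /\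
       forall (S : Struct L) (e e' : nat -> S),
      (forall k, (k < N)%nat -> dist S (e k) (e' k) < delta) ->
      dist S (teval S e (args i)) (teval S e' (args i)) < eps)) as [N HN].
    + intros i N N' HQ HNN eps Heps. destruct (HQ eps Heps) as [d [Hd Hd2]].
      exists d. split; auto. intros S e e' H. apply Hd2. intros k Hk. apply H. lia.
    + intros i. exact (IH i).
    + exists N. intros eps Heps.
      assert (He2 : 0 < eps / 2) by lra.
      pose proof (fmod_pos L f _ He2) as Hfm.
      destruct (fin_down _ (fun i d => forall (S : Struct L) (e e' : nat -> S),
      (forall k, (k < N)%nat -> dist S (e k) (e' k) < d) ->
      dist S (teval S e (args i)) (teval S e' (args i)) < fmod L f (eps/2))) as [d [Hd Hd2]].
      * intros i d d' HP Hdd S e e' H. apply HP. intros k Hk. specialize (H k Hk). lra.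
      * intros i. exact (HN i _ Hfm).
      * exists d. split; auto. intros S e e' H. simpl.
        assert (fint_uc' := fint_uc L S f (eps/2) (fun i => teval S e (args i)) (fun i => teval S e' (args i)) He2).
        assert (dist S (fint S f (fun i => teval S e (args i))) (fint S f (fun i => teval S e' (args i))) <= eps/2).
        { apply fint_uc'. intros i. apply Hd2. exact H. }
        lra.
Qed.

Lemma dist_diff {L : Sig} (S : Struct L) (x1 x2 y1 y2 : S) :
  Rabs (dist S x1 x2 - dist S y1 y2) <= dist S x1 y1 + dist S x2 y2.
Proof.
  pose proof (dist_tri L S x1 y1 x2). pose proof (dist_tri L S y1 y2 x2).
  pose proof (dist_tri L S y1 x1 y2). pose proof (dist_tri L S x1 x2 y2).
  pose proof (dist_sym L S x1 y1). pose proof (dist_sym L S x2 y2).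
  split_Rabs; lra.
Qed.

Lemma lub_props (B : Type) (b0 : B) (f : B -> R) (Hf : forall b, 0 <= f b <= 1) :
  (forall b, f b <= real (Lub_Rbar (fun r => exists b, r = f b))) /\
  (forall y, (forall b, f b <= y) -> real (Lub_Rbar (fun r => exists b, r = f b)) <= y).
Proof.
  destruct (Lub_Rbar_correct (fun r => exists b, r = f b)) as [Hub Hlub].
  remember (Lub_Rbar (fun r => exists b, r = f b)) as l.
  assert (H1 : Rbar_le l 1).
  { apply Hlub. intros x [b ->]. simpl. apply Hf. }
  assert (H0 : Rbar_le (f b0) l) by (apply Hub; eauto).
  destruct l as [s| |]; simpl in *; try contradiction.
  split.
  - intros b. apply (Hub (f b)). eauto.
  - intros y Hy. apply (Hlub (Finite y)). intros x [b ->]. simpl. apply Hy.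
Qed.

Lemma glb_props (B : Type) (b0 : B) (f : B -> R) (Hf : forall b, 0 <= f b <= 1) :
  (forall b, real (Glb_Rbar (fun r => exists b, r = f b)) <= f b) /\
  (forall y, (forall b, y <= f b) -> y <= real (Glb_Rbar (fun r => exists b, r = f b))).
Proof.
  destruct (Glb_Rbar_correct (fun r => exists b, r = f b)) as [Hub Hlub].
  remember (Glb_Rbar (fun r => exists b, r = f b)) as l.
  assert (H1 : Rbar_le 0 l).
  { apply Hlub. intros x [b ->]. simpl. apply Hf. }
  assert (H0 : Rbar_le l (f b0)) by (apply Hub; eauto).
  destruct l as [s| |]; simpl in *; try contradiction.
  split.
  - intros b. apply (Hub (f b)). eauto.
  - intros y Hy. apply (Hlub (Finite y)). intros x [b ->]. simpl. apply Hy.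
Qed.

Lemma fval_bounds {L : Sig} (phi : formula L) : forall (S : Struct L) (e : nat -> S),
  0 <= fval S phi e <= 1.
Proof.
  induction phi as [P args|t1 t2| |p IH|p IH|p IHp q IHq|p IH|p IH]; intros S e; simpl.
  - apply pint_bounds.
  - apply dist_bounds.
  - lra.
  - specialize (IH S e). lra.
  - specialize (IH S e). lra.
  - specialize (IHp S e); specialize (IHq S e). solve_ineq.
  - destruct (lub_props S (point S) (fun b => fval S p (scons b e)) (fun b => IH S _)) as [H1 H2].
    split.
    + specialize (H1 (point S)). pose proof (IH S (scons (point S) e)). lra.
    + apply H2. intros b. apply IH.
  - destruct (glb_props S (point S) (fun b => fval S p (scons b e)) (fun b => IH S _)) as [H1 H2].
    split.
    + apply H2. intros b. apply IH.
    + specialize (H1 (point S)). pose proof (IH S (scons (point S) e)). lra.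
Qed.
Definition UCf {L : Sig} (phi : formula L) :=
  exists N, forall eps, 0 < eps -> exists delta, 0 < delta /\
    forall (S : Struct L) (e e' : nat -> S),
      (forall k, (k < N)%nat -> dist S (e k) (e' k) < delta) ->
      Rabs (fval S phi e - fval S phi e') <= eps.

Lemma Rabs_max_lip (a b c d : R) : Rabs (Rmax (a - b) 0 - Rmax (c - d) 0) <= Rabs (a - c) + Rabs (b - d).
Proof. solve_ineq. Qed.

Lemma UCf_all {L : Sig} (phi : formula L) : UCf phi.
Proof.
  induction phi as [P args|t1 t2| |p IH|p IH|p IHp q IHq|p IH|p IH].
  - destruct (fin_up _ (fun i N => forall eps, 0 < eps -> exists delta, 0 < delta /\
       forall (S : Struct L) (e e' : nat -> S),
      (forall k, (k < N)%nat -> dist S (e k) (e' k) < delta) ->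
      dist S (teval S e (args i)) (teval S e' (args i)) < eps)) as [N HN].
    + intros i N N' HQ HNN eps Heps. destruct (HQ eps Heps) as [d [Hd Hd2]].
      exists d. split; auto. intros S e e' H. apply Hd2. intros k Hk. apply H. lia.
    + intros i. exact (UCt_all (args i)).
    + exists N. intros eps Heps.
      pose proof (pmod_pos L P _ Heps) as Hfm.
      destruct (fin_down _ (fun i d => forall (S : Struct L) (e e' : nat -> S),
      (forall k, (k < N)%nat -> dist S (e k) (e' k) < d) ->
      dist S (teval S e (args i)) (teval S e' (args i)) < pmod L P eps)) as [d [Hd Hd2]].
      * intros i d d' HP Hdd S e e' H. apply HP. intros k Hk. specialize (H k Hk). lra.
      * intros i. exact (HN i _ Hfm).
      * exists d. split; auto. intros S e e' H. simpl.
        apply pint_uc; [exact Heps|]. intros i. apply Hd2. exact H.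
  - destruct (UCt_all t1) as [N1 H1]. destruct (UCt_all t2) as [N2 H2].
    exists (Nat.max N1 N2). intros eps Heps.
    destruct (H1 (eps/2) ltac:(lra)) as [d1 [Hd1 Hd1']].
    destruct (H2 (eps/2) ltac:(lra)) as [d2 [Hd2 Hd2']].
    exists (Rmin d1 d2). split; [apply Rmin_glb_lt; lra|].
    intros S e e' H. simpl.
    pose proof (dist_diff S (teval S e t1) (teval S e t2) (teval S e' t1) (teval S e' t2)).
    assert (dist S (teval S e t1) (teval S e' t1) < eps/2).
    { apply Hd1'. intros k Hk. pose proof (H k ltac:(lia)). pose proof (Rmin_l d1 d2). lra. }
    assert (dist S (teval S e t2) (teval S e' t2) < eps/2).
    { apply Hd2'. intros k Hk. pose proof (H k ltac:(lia)). pose proof (Rmin_r d1 d2). lra. }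
    lra.
  - exists O. intros eps Heps. exists 1. split; [lra|]. intros. simpl.
    rewrite Rminus_0_r, Rabs_R0. lra.
  - destruct IH as [N HN]. exists N. intros eps Heps. destruct (HN eps Heps) as [d [Hd Hd']].
    exists d. split; auto. intros S e e' H. simpl. specialize (Hd' S e e' H).
    replace (1 - fval S p e - (1 - fval S p e')) with (- (fval S p e - fval S p e')) by ring.
    rewrite Rabs_Ropp. exact Hd'.
  - destruct IH as [N HN]. exists N. intros eps Heps. destruct (HN eps Heps) as [d [Hd Hd']].
    exists d. split; auto. intros S e e' H. simpl. specialize (Hd' S e e' H).
    replace (fval S p e / 2 - fval S p e' / 2) with ((fval S p e - fval S p e') / 2) by field.
    unfold Rdiv. rewrite Rabs_mult. rewrite (Rabs_right (/2)) by lra. lra.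
  - destruct IHp as [N1 H1]. destruct IHq as [N2 H2].
    exists (Nat.max N1 N2). intros eps Heps.
    destruct (H1 (eps/2) ltac:(lra)) as [d1 [Hd1 Hd1']].
    destruct (H2 (eps/2) ltac:(lra)) as [d2 [Hd2 Hd2']].
    exists (Rmin d1 d2). split; [apply Rmin_glb_lt; lra|].
    intros S e e' H. simpl.
    pose proof (Rabs_max_lip (fval S p e) (fval S q e) (fval S p e') (fval S q e')).
    assert (Rabs (fval S p e - fval S p e') <= eps/2).
    { apply Hd1'. intros k Hk. pose proof (H k ltac:(lia)). pose proof (Rmin_l d1 d2). lra. }
    assert (Rabs (fval S q e - fval S q e') <= eps/2).
    { apply Hd2'. intros k Hk. pose proof (H k ltac:(lia)). pose proof (Rmin_r d1 d2). lra. }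
    lra.
  - destruct IH as [N HN]. exists N. intros eps Heps. destruct (HN eps Heps) as [d [Hd Hd']].
    exists d. split; auto. intros S e e' H. simpl.
    assert (Hc : forall b, Rabs (fval S p (scons b e) - fval S p (scons b e')) <= eps).
    { intros b. apply Hd'. intros [|k] Hk; simpl.
      - rewrite dist_refl. exact Hd.
      - apply H. lia. }
    destruct (lub_props S (point S) (fun b => fval S p (scons b e)) (fun b => fval_bounds p S _)) as [A1 A2].
    destruct (lub_props S (point S) (fun b => fval S p (scons b e')) (fun b => fval_bounds p S _)) as [B1 B2].
    assert (real (Lub_Rbar (fun r => exists b, r = fval S p (scons b e))) <= real (Lub_Rbar (fun r => exists b, r = fval S p (scons b e'))) + eps).
    { apply A2. intros b. specialize (Hc b). specialize (B1 b). simpl in B1. split_Rabs; lra. }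
    assert (real (Lub_Rbar (fun r => exists b, r = fval S p (scons b e'))) <= real (Lub_Rbar (fun r => exists b, r = fval S p (scons b e))) + eps).
    { apply B2. intros b. specialize (Hc b). specialize (A1 b). simpl in A1. split_Rabs; lra. }
    split_Rabs; lra.
  - destruct IH as [N HN]. exists N. intros eps Heps. destruct (HN eps Heps) as [d [Hd Hd']].
    exists d. split; auto. intros S e e' H. simpl.
    assert (Hc : forall b, Rabs (fval S p (scons b e) - fval S p (scons b e')) <= eps).
    { intros b. apply Hd'. intros [|k] Hk; simpl.
      - rewrite dist_refl. exact Hd.
      - apply H. lia. }
    destruct (glb_props S (point S) (fun b => fval S p (scons b e)) (fun b => fval_bounds p S _)) as [A1 A2].
    destruct (glb_props S (point S) (fun b => fval S p (scons b e')) (fun b => fval_bounds p S _)) as [B1 B2].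
    assert (real (Glb_Rbar (fun r => exists b, r = fval S p (scons b e))) - eps <= real (Glb_Rbar (fun r => exists b, r = fval S p (scons b e')))).
    { apply B2. intros b. specialize (Hc b). specialize (A1 b). simpl in A1. split_Rabs; lra. }
    assert (real (Glb_Rbar (fun r => exists b, r = fval S p (scons b e'))) - eps <= real (Glb_Rbar (fun r => exists b, r = fval S p (scons b e)))).
    { apply A2. intros b. specialize (Hc b). specialize (B1 b). simpl in B1. split_Rabs; lra. }
    split_Rabs; lra.
Qed.

Lemma E_ext {Omega : Type} (E : (Omega -> R) -> R) (X Y : Omega -> R) :
  (forall w, X w = Y w) -> E X = E Y.
Proof. intros H. f_equal. apply functional_extensionality. exact H. Qed.

Lemma E_zero {Omega : Type} (E : (Omega -> R) -> R) (HE : integration_functional E) :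
  E (fun _ => 0) = 0.
Proof.
  destruct HE as [Hb [H1 Ha]].
  assert (inA (fun _ : Omega => 0)) by (intros w; lra).
  pose proof (Ha _ _ H H ltac:(intros w; lra)) as H0. simpl in H0.
  rewrite (E_ext E (fun _ => 0 + 0) (fun _ => 0)) in H0 by (intros; ring). lra.
Qed.

Lemma E_nonneg {Omega : Type} (E : (Omega -> R) -> R) (HE : integration_functional E) X :
  inA X -> 0 <= E X.
Proof. intros H. apply HE. exact H. Qed.

Lemma E_mono {Omega : Type} (E : (Omega -> R) -> R) (HE : integration_functional E) X Y :
  inA X -> inA Y -> (forall w, X w <= Y w) -> E X <= E Y.
Proof.
  intros HX HY Hle. destruct HE as [Hb [H1 Ha]].
  assert (HD : inA (fun w => Y w - X w)) by (intros w; specialize (HX w); specialize (HY w); specialize (Hle w); lra).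
  pose proof (Ha X _ HX HD ltac:(intros w; specialize (HY w); simpl; lra)). cbv beta in H.
  rewrite (E_ext E (fun w => X w + (Y w - X w)) Y) in H by (intros; ring).
  pose proof (Hb _ HD). lra.
Qed.

Lemma E_half {Omega : Type} (E : (Omega -> R) -> R) (HE : integration_functional E) X :
  inA X -> E (fun w => X w / 2) = E X / 2.
Proof.
  intros HX. destruct HE as [Hb [H1 Ha]].
  assert (HH : inA (fun w => X w / 2)) by (intros w; specialize (HX w); lra).
  pose proof (Ha _ _ HH HH ltac:(intros w; specialize (HX w); simpl; lra)). cbv beta in H.
  rewrite (E_ext E (fun w => X w / 2 + X w / 2) X) in H by (intros; field). lra.
Qed.

Lemma E_sub {Omega : Type} (E : (Omega -> R) -> R) (HE : integration_functional E) X Y W :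
  inA X -> inA Y -> inA W -> (forall w, X w <= Y w + W w) -> E X <= E Y + E W.
Proof.
  intros HX HY HW Hle.
  pose proof (E_half E HE X HX) as Q1. pose proof (E_half E HE Y HY) as Q2. pose proof (E_half E HE W HW) as Q3.
  pose proof HE as [Hb [H1 Ha]].
  assert (HY2 : inA (fun w => Y w / 2)) by (intros w; specialize (HY w); lra).
  assert (HW2 : inA (fun w => W w / 2)) by (intros w; specialize (HW w); lra).
  assert (HS : inA (fun w => Y w / 2 + W w / 2)) by (intros w; specialize (HY w); specialize (HW w); lra).
  pose proof (Ha _ _ HY2 HW2 HS) as Q4. cbv beta in Q4.
  assert (E (fun w => X w / 2) <= E (fun w => Y w / 2 + W w / 2)).
  { apply E_mono; [exact HE| |exact HS|].
    - intros w; specialize (HX w); lra.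
    - intros w; specialize (Hle w); lra. }
  lra.
Qed.

Lemma E_pow {Omega : Type} (E : (Omega -> R) -> R) (HE : integration_functional E) i :
  E (fun _ => / 2 ^ i) = / 2 ^ i.
Proof.
  induction i as [|i IH].
  - simpl. rewrite Rinv_1. apply HE.
  - assert (Hp : 0 < 2 ^ i) by (apply pow_lt; lra).
    assert (HA : inA (fun _ : Omega => / 2 ^ i)).
    { intros w. split. left. apply Rinv_0_lt_compat; auto.
      rewrite <- Rinv_1. apply Rinv_le_contravar; [lra|]. apply pow_R1_Rle. lra. }
    rewrite (E_ext E _ (fun w => / 2 ^ i / 2)) by (intros; simpl; field; lra).
    rewrite (E_half E HE _ HA). rewrite IH. simpl. field. lra.
Qed.

Lemma inv_pow_bounds i : 0 < / 2 ^ i <= 1.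
Proof.
  assert (Hp : 0 < 2 ^ i) by (apply pow_lt; lra). split.
  apply Rinv_0_lt_compat; auto.
  rewrite <- Rinv_1. apply Rinv_le_contravar; [lra|]. apply pow_R1_Rle. lra.
Qed.

Lemma inv_pow_small eps : 0 < eps -> exists i, / 2 ^ i < eps.
Proof.
  intros He. destruct (pow_lt_1_zero (/2) ltac:(rewrite Rabs_right; lra) eps He) as [N HN].
  exists N. specialize (HN N (le_n N)). rewrite pow_inv in HN.
  rewrite Rabs_right in HN; auto. left. apply Rinv_0_lt_compat, pow_lt. lra.
Qed.

Definition sumL {Omega : Type} (Ts : list (Omega -> R)) (w : Omega) : R :=
  fold_right (fun T acc => T w + acc) 0 Ts.
Definition sumEL {Omega : Type} (E : (Omega -> R) -> R) (Ts : list (Omega -> R)) : R :=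
  fold_right (fun T acc => E T + acc) 0 Ts.

Lemma sumL_nonneg {Omega : Type} (Ts : list (Omega -> R)) :
  (forall T, In T Ts -> inA T) -> forall w, 0 <= sumL Ts w.
Proof.
  unfold sumL. induction Ts as [|T Ts IH]; intros H w; simpl. lra.
  pose proof (H T (or_introl eq_refl) w). pose proof (IH (fun T' h => H T' (or_intror h)) w).
  lra.
Qed.

Lemma E_list {Omega : Type} (E : (Omega -> R) -> R) (HE : integration_functional E) Ts :
  (forall T, In T Ts -> inA T) -> forall X, inA X -> (forall w, X w <= sumL Ts w) ->
  E X <= sumEL E Ts.
Proof.
  induction Ts as [|T Ts IH]; intros HT X HX Hle; simpl.
  - rewrite (E_ext E X (fun _ => 0)). rewrite E_zero; auto. lra.
    intros w. specialize (Hle w). specialize (HX w). simpl in Hle. lra.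
  - assert (HT0 : inA T) by (apply HT; left; auto).
    assert (HTs : forall T', In T' Ts -> inA T') by (intros; apply HT; right; auto).
    assert (HX' : inA (fun w => Rmax (X w - T w) 0)).
    { intros w. specialize (HX w). specialize (HT0 w). solve_ineq. }
    pose proof (IH HTs _ HX').
    assert (E X <= E T + E (fun w => Rmax (X w - T w) 0)).
    { apply E_sub; auto. intros w. solve_ineq. }
    assert (E (fun w => Rmax (X w - T w) 0) <= sumEL E Ts).
    { apply H. intros w. specialize (Hle w). simpl in Hle.
      pose proof (sumL_nonneg Ts HTs w). unfold sumL in *. solve_ineq. }
    unfold sumEL in *. lra.
Qed.

Fixpoint sumk (N : nat) (f : nat -> R) : R :=
  match N with O => 0 | S N' => sumk N' f + f N' end.

Fixpoint hmax {Omega : Type} (N : nat) (D : nat -> Omega -> R) (w : Omega) : R :=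
  match N with O => 0 | S N' => Rmax (hmax N' D w) (D N' w) end.

Lemma hmax_inA {Omega : Type} N (D : nat -> Omega -> R) :
  (forall k, inA (D k)) -> inA (hmax N D).
Proof.
  intros HD. induction N as [|N IH]; intros w; simpl. lra.
  specialize (IH w). specialize (HD N w). solve_ineq.
Qed.

Lemma hmax_ge {Omega : Type} N (D : nat -> Omega -> R) k w :
  (k < N)%nat -> D k w <= hmax N D w.
Proof.
  induction N as [|N IH]; intros Hk; simpl. lia.
  destruct (Nat.eq_dec k N) as [->|Hne]. apply Rmax_r.
  eapply Rle_trans; [apply IH; lia|apply Rmax_l].
Qed.

Lemma hmax_lt {Omega : Type} N (D : nat -> Omega -> R) w d :
  0 < d -> hmax N D w < d -> forall k, (k < N)%nat -> D k w < d.
Proof. intros Hd H k Hk. pose proof (hmax_ge N D k w Hk). lra. Qed.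

Lemma E_hmax {Omega : Type} (E : (Omega -> R) -> R) (HE : integration_functional E) N D :
  (forall k, inA (D k)) -> E (hmax N D) <= sumk N (fun k => E (D k)).
Proof.
  intros HD. induction N as [|N IH]; simpl.
  - rewrite E_zero; auto. lra.
  - assert (E (fun w => Rmax (hmax N D w) (D N w)) <= E (hmax N D) + E (D N)).
    { apply E_sub; auto. apply (hmax_inA (S N) D HD). apply hmax_inA; auto.
      intros w. pose proof (hmax_inA N D HD w). specialize (HD N w). solve_ineq. }
    change (hmax (S N) D) with (fun w => Rmax (hmax N D w) (D N w)). lra.
Qed.

Lemma E_pow2 {Omega : Type} (E : (Omega -> R) -> R) (HE : integration_functional E) j Y :
  inA Y -> E (fun w => Rmin 1 (2 ^ j * Y w)) <= 2 ^ j * E Y.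
Proof.
  intros HY. induction j as [|j IH].
  - simpl. rewrite (E_ext E _ Y). lra. intros w. specialize (HY w). rewrite Rmult_1_l.
    apply Rmin_right. lra.
  - assert (Hp : 0 < 2 ^ j) by (apply pow_lt; lra).
    assert (HA : inA (fun w => Rmin 1 (2 ^ j * Y w))).
    { intros w. specialize (HY w). unfold Rmin. destruct Rle_dec; try lra. split; try lra. nra. }
    rewrite (E_ext E _ (fun w => Rmin 1 (2 * Rmin 1 (2 ^ j * Y w)))).
    + assert (E (fun w => Rmin 1 (2 * Rmin 1 (2 ^ j * Y w))) <=
              E (fun w => Rmin 1 (2 ^ j * Y w)) + E (fun w => Rmin 1 (2 ^ j * Y w))).
      { apply E_sub; auto.
        - intros w. specialize (HA w). solve_ineq.
        - intros w. specialize (HA w). solve_ineq. }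
      simpl. lra.
    + intros w. specialize (HY w). simpl. unfold Rmin.
      repeat destruct Rle_dec; try lra; nra.
Qed.

Lemma E_control {Omega : Type} (E : (Omega -> R) -> R) (HE : integration_functional E)
  (G : Omega -> R) (D : nat -> Omega -> R) N delta i j :
  inA G -> (forall k, inA (D k)) -> 0 < delta -> / 2 ^ j <= delta ->
  (forall w, (forall k, (k < N)%nat -> D k w < delta) -> G w <= / 2 ^ i) ->
  E G <= / 2 ^ i + 2 ^ j * sumk N (fun k => E (D k)).
Proof.
  intros HG HD Hd Hj Himp.
  pose proof (hmax_inA N D HD) as HH.
  assert (Hp : 0 < 2 ^ j) by (apply pow_lt; lra).
  pose proof (inv_pow_bounds i) as Hi.
  assert (HA : inA (fun w => Rmin 1 (2 ^ j * hmax N D w))).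
  { intros w. specialize (HH w). unfold Rmin. destruct Rle_dec; try lra. split; try lra. nra. }
  assert (E G <= E (fun _ => / 2 ^ i) + E (fun w => Rmin 1 (2 ^ j * hmax N D w))).
  { apply E_sub; auto. intros w; lra.
    intros w. destruct (Rlt_dec (hmax N D w) delta) as [Hl|Hl].
    - pose proof (Himp w (hmax_lt N D w delta Hd Hl)). specialize (HA w). lra.
    - assert (1 <= 2 ^ j * hmax N D w).
      { assert (2 ^ j * / 2 ^ j = 1) by (field; lra).
        assert (2 ^ j * / 2 ^ j <= 2 ^ j * hmax N D w) by (apply Rmult_le_compat_l; lra). lra. }
      rewrite Rmin_left by lra. specialize (HG w). lra. }
  rewrite E_pow in H; auto.
  pose proof (E_pow2 E HE j _ HH). pose proof (E_hmax E HE N D HD).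
  assert (2 ^ j * E (hmax N D) <= 2 ^ j * sumk N (fun k => E (D k))) by (apply Rmult_le_compat_l; lra).
  lra.
Qed.

Definition CauchyEnv {L : Sig} {Omega : Type} (M : Omega -> Struct L)
  (E : (Omega -> R) -> R) (e : nat -> nat -> Prod M) := forall k, cauchyM M E (e k).

Definition canon {L : Sig} {Omega : Type} (M : Omega -> Struct L) (phi : formula L)
  (e : nat -> nat -> Prod M) : nat -> Omega -> R :=
  fun n w => fval (M w) phi (fun k => e k n w).

Definition seqA {Omega : Type} (X : nat -> Omega -> R) := forall n, inA (X n).

Definition small {Omega : Type} (E : (Omega -> R) -> R) (F : nat -> Omega -> R) :=
  forall eps, 0 < eps -> exists N, forall n, (N <= n)%nat -> E (F n) < eps.

Lemma inA_absd {Omega : Type} (X Y : Omega -> R) : inA X -> inA Y -> inA (fun w => Rabs (X w - Y w)).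
Proof. intros HX HY w. specialize (HX w). specialize (HY w). solve_ineq. Qed.
Lemma inA_maxd {Omega : Type} (X Y : Omega -> R) : inA X -> inA Y -> inA (fun w => Rmax (X w - Y w) 0).
Proof. intros HX HY w. specialize (HX w). specialize (HY w). solve_ineq. Qed.

Lemma canon_inA {L : Sig} {Omega : Type} (M : Omega -> Struct L) phi e n : inA (canon M phi e n).
Proof. intros w. apply fval_bounds. Qed.

Lemma dist_inA {L : Sig} {Omega : Type} (M : Omega -> Struct L) (a b : Prod M) :
  inA (fun w => dist (M w) (a w) (b w)).
Proof. intros w. apply dist_bounds. Qed.

Lemma dM_nonneg {L : Sig} {Omega : Type} (M : Omega -> Struct L) E (HE : integration_functional E) a b :
  0 <= dM M E a b.
Proof. apply HE. apply dist_inA. Qed.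

Lemma dM_refl {L : Sig} {Omega : Type} (M : Omega -> Struct L) E (HE : integration_functional E) a :
  dM M E a a = 0.
Proof. unfold dM. rewrite (E_ext E _ (fun _ => 0)). apply E_zero; auto. intros w. apply dist_refl. Qed.

Lemma est {L : Sig} {Omega : Type} (M : Omega -> Struct L) E (HE : integration_functional E) phi :
  exists N, forall i, exists j, forall env1 env2 : nat -> Prod M,
  E (fun w => Rabs (fval (M w) phi (fun k => env1 k w) - fval (M w) phi (fun k => env2 k w)))
   <= / 2 ^ i + 2 ^ j * sumk N (fun k => dM M E (env1 k) (env2 k)).
Proof.
  destruct (UCf_all phi) as [N HN]. exists N. intros i.
  destruct (HN (/ 2 ^ i) ltac:(apply inv_pow_bounds)) as [d [Hd Hd']].
  destruct (inv_pow_small d Hd) as [j Hj]. exists j. intros env1 env2.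
  apply (E_control E HE _ (fun k w => dist (M w) (env1 k w) (env2 k w)) N d i j).
  - intros w. pose proof (fval_bounds phi (M w) (fun k => env1 k w)).
    pose proof (fval_bounds phi (M w) (fun k => env2 k w)). split_Rabs; lra.
  - intros k. apply dist_inA.
  - exact Hd.
  - lra.
  - intros w Hw. apply (Hd' (M w)). exact Hw.
Qed.

Lemma sumk_nonneg N f : (forall k, 0 <= f k) -> 0 <= sumk N f.
Proof. intros H. induction N; simpl. lra. specialize (H N). lra. Qed.

Lemma env_small {L : Sig} {Omega : Type} (M : Omega -> Struct L) E (e : nat -> nat -> Prod M) :
  CauchyEnv M E e -> forall N eta, 0 < eta -> exists N0, forall n m, (N0 <= n)%nat -> (N0 <= m)%nat ->
  sumk N (fun k => dM M E (e k n) (e k m)) < eta.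
Proof.
  intros He N. induction N as [|N IH]; intros eta Heta.
  - exists O. intros. simpl. exact Heta.
  - destruct (IH (eta/2) ltac:(lra)) as [N1 H1].
    destruct (He N (eta/2) ltac:(lra)) as [N2 H2].
    exists (Nat.max N1 N2). intros n m Hn Hm. simpl.
    specialize (H1 n m ltac:(lia) ltac:(lia)). specialize (H2 n m ltac:(lia) ltac:(lia)). lra.
Qed.

Lemma canon_cauchy {L : Sig} {Omega : Type} (M : Omega -> Struct L) E (HE : integration_functional E) phi e :
  CauchyEnv M E e -> isAhat E (canon M phi e).
Proof.
  intros He. split.
  - intros n. apply canon_inA.
  - intros eps Heps.
    destruct (inv_pow_small (eps/2) ltac:(lra)) as [i Hi].
    destruct (est M E HE phi) as [N HN]. destruct (HN i) as [j Hj].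
    assert (Hp : 0 < 2 ^ j) by (apply pow_lt; lra).
    destruct (env_small M E e He N (eps / 2 / 2 ^ j) ltac:(apply Rdiv_lt_0_compat; lra)) as [N0 H0].
    exists N0. intros m n Hm Hn.
    specialize (Hj (fun k => e k m) (fun k => e k n)). specialize (H0 m n Hm Hn).
    unfold canon.
    assert (2 ^ j * sumk N (fun k => dM M E (e k m) (e k n)) < eps / 2).
    { replace (eps/2) with (2 ^ j * (eps / 2 / 2 ^ j)) by (field; lra).
      apply Rmult_lt_compat_l; auto. }
    lra.
Qed.

Lemma small_list {Omega : Type} (E : (Omega -> R) -> R) (Ts : list (nat -> Omega -> R)) :
  (forall T, In T Ts -> small E T) -> forall eps, 0 < eps -> exists N, forall n, (N <= n)%nat ->
  sumEL E (map (fun T => T n) Ts) < eps.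
Proof.
  induction Ts as [|T Ts IH]; intros HT eps Heps.
  - exists O. intros. simpl. lra.
  - destruct (IH (fun T' h => HT T' (or_intror h)) (eps/2) ltac:(lra)) as [N1 H1].
    destruct (HT T (or_introl eq_refl) (eps/2) ltac:(lra)) as [N2 H2].
    exists (Nat.max N1 N2). intros n Hn. unfold sumEL in *. simpl.
    specialize (H1 n ltac:(lia)). specialize (H2 n ltac:(lia)). lra.
Qed.

Lemma small_bound {Omega : Type} (E : (Omega -> R) -> R) (HE : integration_functional E)
  (F : nat -> Omega -> R) (Ts : list (nat -> Omega -> R)) :
  seqA F -> (forall T, In T Ts -> small E T /\ seqA T) ->
  (forall n w, F n w <= sumL (map (fun T => T n) Ts) w) -> small E F.
Proof.
  intros HF HT Hle eps Heps.
  destruct (small_list E Ts (fun T h => proj1 (HT T h)) eps Heps) as [N HN].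
  exists N. intros n Hn. specialize (HN n Hn).
  assert (E (F n) <= sumEL E (map (fun T => T n) Ts)).
  { apply E_list; auto. intros T' H'. apply in_map_iff in H'. destruct H' as [T [<- HT']].
    apply (HT T HT'). }
  lra.
Qed.

Lemma eqvA_refl {Omega : Type} (E : (Omega -> R) -> R) (HE : integration_functional E) Z : eqvA E Z Z.
Proof.
  intros eps Heps. exists O. intros n _. rewrite (E_ext E _ (fun _ => 0)). rewrite E_zero; auto.
  intros w. rewrite Rminus_diag, Rabs_R0. reflexivity.
Qed.

Ltac in_cases H := simpl in H; repeat (destruct H as [<-|H]); [..|contradiction].

Lemma leA_eqv {Omega : Type} (E : (Omega -> R) -> R) (HE : integration_functional E) Z C :
  isAhat E Z -> isAhat E C -> leA E Z C -> leA E C Z -> eqvA E Z C.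
Proof.
  intros [HZ _] [HC _] H1 H2.
  apply (small_bound E HE _ [fun n w => Rmax (Z n w - C n w) 0; fun n w => Rmax (C n w - Z n w) 0]).
  - intros n. apply inA_absd; auto.
  - intros T HT. in_cases HT; split; auto; intros n; apply inA_maxd; auto.
  - intros n w. unfold sumL; simpl. solve_ineq.
Qed.

Lemma sup_abs {L : Sig} {Omega : Type} (M : Omega -> Struct L) E (HE : integration_functional E)
  (C : nat -> Omega -> R) (Fam : (nat -> Prod M) -> (nat -> Omega -> R) -> Prop)
  (Cb : (nat -> Prod M) -> nat -> Omega -> R) :
  isAhat E C -> (forall b, cauchyM M E b -> isAhat E (Cb b)) ->
  (forall b W, cauchyM M E b -> (Fam b W <-> isAhat E W /\ eqvA E W (Cb b))) ->
  (forall b, cauchyM M E b -> forall n w, Cb b n w <= C n w) ->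
  (forall eps, 0 < eps -> exists b, cauchyM M E b /\ exists N, forall n, (N <= n)%nat ->
      E (fun w => Rmax (C n w - Cb b n w) 0) < eps) ->
  forall Z,
  (isAhat E Z /\ (forall b, cauchyM M E b -> exists W, Fam b W) /\
   (forall b W, cauchyM M E b -> Fam b W -> leA E W Z) /\
   (forall V, isAhat E V -> (forall b W, cauchyM M E b -> Fam b W -> leA E W V) -> leA E Z V))
  <-> (isAhat E Z /\ eqvA E Z C).
Proof.
  intros HC HCb HFam Hub Hap.
  assert (Back : forall Z, isAhat E Z -> eqvA E Z C ->
   (isAhat E Z /\ (forall b, cauchyM M E b -> exists W, Fam b W) /\
   (forall b W, cauchyM M E b -> Fam b W -> leA E W Z) /\
   (forall V, isAhat E V -> (forall b W, cauchyM M E b -> Fam b W -> leA E W V) -> leA E Z V))).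
  { intros Z HZ HZC. split; [exact HZ|]. split; [|split].
    - intros b Hb. exists (Cb b). apply HFam; auto. split; auto. apply eqvA_refl; auto.
    - intros b W Hb HW. apply HFam in HW; auto. destruct HW as [HWa HWe].
      pose proof (Hub b Hb) as Hu.
      apply (small_bound E HE _ [fun n w => Rabs (W n w - Cb b n w); fun n w => Rabs (Z n w - C n w)]).
      + intros n. apply inA_maxd; [apply HWa|apply HZ].
      + intros T HT. in_cases HT; split; auto; intros n; apply inA_absd;
          first [apply HWa|apply HZ|apply (HCb b Hb)|apply HC].
      + intros n w. unfold sumL; simpl. specialize (Hu n w). solve_ineq.
    - intros V HV Hvub eps Heps.
      destruct (Hap (eps/3) ltac:(lra)) as [b [Hb [N1 HN1]]].
      assert (HF : Fam b (Cb b)) by (apply HFam; auto; split; auto; apply eqvA_refl; auto).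
      destruct (Hvub b (Cb b) Hb HF (eps/3) ltac:(lra)) as [N3 HN3].
      destruct (HZC (eps/3) ltac:(lra)) as [N2 HN2].
      exists (Nat.max N1 (Nat.max N2 N3)). intros n Hn.
      specialize (HN1 n ltac:(lia)). specialize (HN2 n ltac:(lia)). specialize (HN3 n ltac:(lia)).
      destruct HZ as [HZa _]. destruct HV as [HVa _]. destruct HC as [HCa _].
      destruct (HCb b Hb) as [HCba _].
      assert (E (fun w => Rmax (Z n w - V n w) 0) <= sumEL E
        [fun w => Rabs (Z n w - C n w); fun w => Rmax (C n w - Cb b n w) 0;
         fun w => Rmax (Cb b n w - V n w) 0]).
      { apply E_list; auto.
        - intros T HT. in_cases HT; first [apply inA_absd|apply inA_maxd]; auto.
        - apply inA_maxd; auto.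
        - intros w. unfold sumL; simpl. solve_ineq. }
      unfold sumEL in H; simpl in H. lra. }
  intros Z. split.
  - intros (HZ & H1 & H2 & H3). split; auto.
    destruct (Back C HC (eqvA_refl E HE C)) as (_ & G1 & G2 & G3).
    apply leA_eqv; auto.
  - intros [HZ HZC]. apply Back; auto.
Qed.

Lemma inf_abs {L : Sig} {Omega : Type} (M : Omega -> Struct L) E (HE : integration_functional E)
  (C : nat -> Omega -> R) (Fam : (nat -> Prod M) -> (nat -> Omega -> R) -> Prop)
  (Cb : (nat -> Prod M) -> nat -> Omega -> R) :
  isAhat E C -> (forall b, cauchyM M E b -> isAhat E (Cb b)) ->
  (forall b W, cauchyM M E b -> (Fam b W <-> isAhat E W /\ eqvA E W (Cb b))) ->
  (forall b, cauchyM M E b -> forall n w, C n w <= Cb b n w) ->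
  (forall eps, 0 < eps -> exists b, cauchyM M E b /\ exists N, forall n, (N <= n)%nat ->
      E (fun w => Rmax (Cb b n w - C n w) 0) < eps) ->
  forall Z,
  (isAhat E Z /\ (forall b, cauchyM M E b -> exists W, Fam b W) /\
   (forall b W, cauchyM M E b -> Fam b W -> leA E Z W) /\
   (forall V, isAhat E V -> (forall b W, cauchyM M E b -> Fam b W -> leA E V W) -> leA E V Z))
  <-> (isAhat E Z /\ eqvA E Z C).
Proof.
  intros HC HCb HFam Hub Hap.
  assert (Back : forall Z, isAhat E Z -> eqvA E Z C ->
   (isAhat E Z /\ (forall b, cauchyM M E b -> exists W, Fam b W) /\
   (forall b W, cauchyM M E b -> Fam b W -> leA E Z W) /\
   (forall V, isAhat E V -> (forall b W, cauchyM M E b -> Fam b W -> leA E V W) -> leA E V Z))).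
  { intros Z HZ HZC. split; [exact HZ|]. split; [|split].
    - intros b Hb. exists (Cb b). apply HFam; auto. split; auto. apply eqvA_refl; auto.
    - intros b W Hb HW. apply HFam in HW; auto. destruct HW as [HWa HWe].
      pose proof (Hub b Hb) as Hu.
      apply (small_bound E HE _ [fun n w => Rabs (W n w - Cb b n w); fun n w => Rabs (Z n w - C n w)]).
      + intros n. apply inA_maxd; [apply HZ|apply HWa].
      + intros T HT. in_cases HT; split; auto; intros n; apply inA_absd;
          first [apply HWa|apply HZ|apply (HCb b Hb)|apply HC].
      + intros n w. unfold sumL; simpl. specialize (Hu n w). solve_ineq.
    - intros V HV Hvub eps Heps.
      destruct (Hap (eps/3) ltac:(lra)) as [b [Hb [N1 HN1]]].
      assert (HF : Fam b (Cb b)) by (apply HFam; auto; split; auto; apply eqvA_refl; auto).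
      destruct (Hvub b (Cb b) Hb HF (eps/3) ltac:(lra)) as [N3 HN3].
      destruct (HZC (eps/3) ltac:(lra)) as [N2 HN2].
      exists (Nat.max N1 (Nat.max N2 N3)). intros n Hn.
      specialize (HN1 n ltac:(lia)). specialize (HN2 n ltac:(lia)). specialize (HN3 n ltac:(lia)).
      destruct HZ as [HZa _]. destruct HV as [HVa _]. destruct HC as [HCa _].
      destruct (HCb b Hb) as [HCba _].
      assert (E (fun w => Rmax (V n w - Z n w) 0) <= sumEL E
        [fun w => Rabs (Z n w - C n w); fun w => Rmax (Cb b n w - C n w) 0;
         fun w => Rmax (V n w - Cb b n w) 0]).
      { apply E_list; auto.
        - intros T HT. in_cases HT; first [apply inA_absd|apply inA_maxd]; auto.
        - apply inA_maxd; auto.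
        - intros w. unfold sumL; simpl. solve_ineq. }
      unfold sumEL in H; simpl in H. lra. }
  intros Z. split.
  - intros (HZ & H1 & H2 & H3). split; auto.
    destruct (Back C HC (eqvA_refl E HE C)) as (_ & G1 & G2 & G3).
    apply leA_eqv; auto.
  - intros [HZ HZC]. apply Back; auto.
Qed.

Lemma scons_pt {L : Sig} {Omega : Type} (M : Omega -> Struct L) (b : nat -> Prod M)
  (e : nat -> nat -> Prod M) n w :
  (fun k => scons b e k n w) = scons (b n w) (fun k => e k n w).
Proof. apply functional_extensionality. intros [|k]; reflexivity. Qed.

Lemma sumk_shift N (g h : nat -> R) :
  g O = 0 -> (forall k, g (S k) = h k) -> sumk (S N) g = sumk N h.
Proof.
  intros H0 HS. induction N as [|N IH]; simpl in *. lra.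
  rewrite IH, HS. reflexivity.
Qed.

Lemma sumk_scons_le N (g h : nat -> R) :
  g O = 0 -> (forall k, g (S k) = h k) -> (forall k, 0 <= h k) -> sumk N g <= sumk N h.
Proof.
  intros H0 HS Hh. rewrite <- (sumk_shift N g h H0 HS). simpl.
  assert (0 <= g N) by (destruct N; [rewrite H0; lra| rewrite HS; apply Hh]). lra.
Qed.

Lemma cauchyEnv_scons {L : Sig} {Omega : Type} (M : Omega -> Struct L) E b e :
  cauchyM M E b -> CauchyEnv M E e -> CauchyEnv M E (scons b e).
Proof. intros Hb He [|k]; simpl; auto. Qed.

Lemma const_cauchy {L : Sig} {Omega : Type} (M : Omega -> Struct L) E (HE : integration_functional E) (b0 : Prod M) :
  cauchyM M E (fun _ => b0).
Proof. intros eps Heps. exists O. intros. rewrite dM_refl; auto. Qed.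

Lemma approx_core {L : Sig} {Omega : Type} (M : Omega -> Struct L) E (HE : integration_functional E)
  p e (He : CauchyEnv M E e) (C : nat -> Omega -> R) (HC : isAhat E C) eps (Heps : 0 < eps) :
  exists i N1, / 2 ^ i < eps / 6 /\
   forall b0 : Prod M, forall n, (N1 <= n)%nat ->
   E (fun w => Rabs (C n w - C N1 w)) < eps / 6 /\
   E (fun w => Rabs (canon M p (scons (fun _ => b0) e) N1 w - canon M p (scons (fun _ => b0) e) n w)) < eps / 3.
Proof.
  destruct (inv_pow_small (eps/6) ltac:(lra)) as [i Hi].
  destruct HC as [_ HCc]. destruct (HCc (eps/6) ltac:(lra)) as [Nc HNc].
  destruct (est M E HE p) as [Np HNp]. destruct (HNp i) as [j Hj].
  assert (Hp : 0 < 2 ^ j) by (apply pow_lt; lra).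
  destruct (env_small M E e He Np (eps / 6 / 2 ^ j) ltac:(apply Rdiv_lt_0_compat; lra)) as [Ns HNs].
  exists i, (Nat.max Nc Ns). split; auto. intros b0 n Hn. split.
  - apply HNc; lia.
  - unfold canon.
    specialize (Hj (fun k => scons (fun _ : nat => b0) e k (Nat.max Nc Ns))
                   (fun k => scons (fun _ : nat => b0) e k n)).
    assert (Hs : sumk Np (fun k => dM M E (scons (fun _ : nat => b0) e k (Nat.max Nc Ns))
                   (scons (fun _ : nat => b0) e k n)) <= sumk Np (fun k => dM M E (e k (Nat.max Nc Ns)) (e k n))).
    { apply sumk_scons_le.
      - simpl. apply dM_refl; auto.
      - intros k. reflexivity.
      - intros k. apply dM_nonneg; auto. }
    specialize (HNs (Nat.max Nc Ns) n ltac:(lia) ltac:(lia)).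
    assert (2 ^ j * sumk Np (fun k => dM M E (e k (Nat.max Nc Ns)) (e k n)) < eps / 6).
    { replace (eps/6) with (2 ^ j * (eps / 6 / 2 ^ j)) by (field; lra).
      apply Rmult_lt_compat_l; auto. }
    assert (2 ^ j * sumk Np (fun k => dM M E (scons (fun _ : nat => b0) e k (Nat.max Nc Ns))
                   (scons (fun _ : nat => b0) e k n)) <= 2 ^ j * sumk Np (fun k => dM M E (e k (Nat.max Nc Ns)) (e k n)))
      by (apply Rmult_le_compat_l; lra).
    lra.
Qed.

Lemma sup_approx {L : Sig} {Omega : Type} (M : Omega -> Struct L) E (HE : integration_functional E)
  p e (He : CauchyEnv M E e) :
  forall eps, 0 < eps -> exists b, cauchyM M E b /\ exists N, forall n, (N <= n)%nat ->
    E (fun w => Rmax (canon M (FSup p) e n w - canon M p (scons b e) n w) 0) < eps.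
Proof.
  intros eps Heps.
  destruct (approx_core M E HE p e He (canon M (FSup p) e) (canon_cauchy M E HE _ e He) eps Heps)
    as [i [N1 [Hi Hcore]]].
  assert (Hch : forall w, exists x : M w,
    canon M (FSup p) e N1 w - / 2 ^ i < fval (M w) p (scons x (fun k => e k N1 w))).
  { intros w. apply not_all_not_ex. intros Hn.
    destruct (lub_props (M w) (point (M w)) (fun b => fval (M w) p (scons b (fun k => e k N1 w)))
      (fun b => fval_bounds p (M w) _)) as [_ H2].
    assert (canon M (FSup p) e N1 w <= canon M (FSup p) e N1 w - / 2 ^ i).
    { apply H2. intros b. apply Rnot_lt_le. apply Hn. }
    pose proof (inv_pow_bounds i). lra. }
  pose (b0 := fun w => proj1_sig (constructive_indefinite_description _ (Hch w))).
  exists (fun _ => b0). split; [apply const_cauchy; auto|].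
  exists N1. intros n Hn. destruct (Hcore b0 n Hn) as [A1 A2].
  set (Cb := canon M p (scons (fun _ => b0) e)) in *.
  set (C := canon M (FSup p) e) in *.
  assert (Hw : forall w, C N1 w - / 2 ^ i < Cb N1 w).
  { intros w. unfold Cb.
    change (canon M p (scons (fun _ => b0) e) N1 w) with (fval (M w) p (fun k => scons (fun _ => b0) e k N1 w)).
    eapply Rlt_le_trans; [exact (proj2_sig (constructive_indefinite_description _ (Hch w)))|].
    right. f_equal. symmetry. apply (scons_pt M (fun _ => b0) e N1 w). }
  pose proof (inv_pow_bounds i) as Hib.
  assert (E (fun w => Rmax (C n w - Cb n w) 0) <= sumEL E
    [fun w => Rabs (C n w - C N1 w); fun _ => / 2 ^ i; fun w => Rabs (Cb N1 w - Cb n w)]).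
  { apply E_list; auto.
    - intros T HT. in_cases HT; try apply inA_absd; try apply canon_inA.
      intros w; lra.
    - apply inA_maxd; apply canon_inA.
    - intros w. unfold sumL; simpl. specialize (Hw w). solve_ineq. }
  unfold sumEL in H; simpl in H. rewrite E_pow in H; auto.
  change (E (fun w => Rmax (C n w - Cb n w) 0) < eps).
  change (E (fun w => Rabs (Cb N1 w - Cb n w)) < eps/3) in A2.
  change (E (fun w => Rabs (C n w - C N1 w)) < eps/6) in A1. lra.
Qed.

Lemma inf_approx {L : Sig} {Omega : Type} (M : Omega -> Struct L) E (HE : integration_functional E)
  p e (He : CauchyEnv M E e) :
  forall eps, 0 < eps -> exists b, cauchyM M E b /\ exists N, forall n, (N <= n)%nat ->
    E (fun w => Rmax (canon M p (scons b e) n w - canon M (FInf p) e n w) 0) < eps.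
Proof.
  intros eps Heps.
  destruct (approx_core M E HE p e He (canon M (FInf p) e) (canon_cauchy M E HE _ e He) eps Heps)
    as [i [N1 [Hi Hcore]]].
  assert (Hch : forall w, exists x : M w,
    fval (M w) p (scons x (fun k => e k N1 w)) < canon M (FInf p) e N1 w + / 2 ^ i).
  { intros w. apply not_all_not_ex. intros Hn.
    destruct (glb_props (M w) (point (M w)) (fun b => fval (M w) p (scons b (fun k => e k N1 w)))
      (fun b => fval_bounds p (M w) _)) as [_ H2].
    assert (canon M (FInf p) e N1 w + / 2 ^ i <= canon M (FInf p) e N1 w).
    { apply H2. intros b. apply Rnot_lt_le. apply Hn. }
    pose proof (inv_pow_bounds i). lra. }
  pose (b0 := fun w => proj1_sig (constructive_indefinite_description _ (Hch w))).
  exists (fun _ => b0). split; [apply const_cauchy; auto|].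
  exists N1. intros n Hn. destruct (Hcore b0 n Hn) as [A1 A2].
  set (Cb := canon M p (scons (fun _ => b0) e)) in *.
  set (C := canon M (FInf p) e) in *.
  assert (Hw : forall w, Cb N1 w < C N1 w + / 2 ^ i).
  { intros w. unfold Cb.
    change (canon M p (scons (fun _ => b0) e) N1 w) with (fval (M w) p (fun k => scons (fun _ => b0) e k N1 w)).
    eapply Rle_lt_trans; [|exact (proj2_sig (constructive_indefinite_description _ (Hch w)))].
    right. f_equal. apply (scons_pt M (fun _ => b0) e N1 w). }
  pose proof (inv_pow_bounds i) as Hib.
  assert (E (fun w => Rmax (Cb n w - C n w) 0) <= sumEL E
    [fun w => Rabs (C n w - C N1 w); fun _ => / 2 ^ i; fun w => Rabs (Cb N1 w - Cb n w)]).
  { apply E_list; auto.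
    - intros T HT. in_cases HT; try apply inA_absd; try apply canon_inA.
      intros w; lra.
    - apply inA_maxd; apply canon_inA.
    - intros w. unfold sumL; simpl. specialize (Hw w). solve_ineq. }
  unfold sumEL in H; simpl in H. rewrite E_pow in H; auto.
  change (E (fun w => Rmax (Cb n w - C n w) 0) < eps).
  change (E (fun w => Rabs (Cb N1 w - Cb n w)) < eps/3) in A2.
  change (E (fun w => Rabs (C n w - C N1 w)) < eps/6) in A1. lra.
Qed.

Lemma main_lemma {L : Sig} {Omega : Type} (M : Omega -> Struct L) E (HE : integration_functional E) :
  forall phi e, CauchyEnv M E e -> forall Z,
  Den M E phi e Z <-> isAhat E Z /\ eqvA E Z (canon M phi e).
Proof.
  intros phi. induction phi as [P args|t1 t2| |p IH|p IH|p IHp q IHq|p IH|p IH];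
    intros e He Z; cbn [Den].
  - apply iff_refl.
  - apply iff_refl.
  - apply iff_refl.
  - split.
    + intros [HZ [W [HW Heq]]]. apply IH in HW; auto. destruct HW as [[HWa _] HWe].
      split; auto.
      apply (small_bound E HE _ [fun n w => Rabs (Z n w - (1 - W n w)); fun n w => Rabs (W n w - canon M p e n w)]).
      * intros n. apply inA_absd; [apply HZ|apply canon_inA].
      * intros T HT. in_cases HT; split; auto; intros n.
        -- apply inA_absd; [apply HZ|]. intros w; specialize (HWa n w); lra.
        -- apply inA_absd; [apply HWa|apply canon_inA].
      * intros n w. unfold sumL, canon; simpl. solve_ineq.
    + intros [HZ Heq]. split; auto. exists (canon M p e). split; [|exact Heq].
      apply IH; auto. split; [apply canon_cauchy; auto|apply eqvA_refl; auto].
  - split.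
    + intros [HZ [W [HW Heq]]]. apply IH in HW; auto. destruct HW as [[HWa _] HWe].
      split; auto.
      apply (small_bound E HE _ [fun n w => Rabs (Z n w - W n w / 2); fun n w => Rabs (W n w - canon M p e n w)]).
      * intros n. apply inA_absd; [apply HZ|apply canon_inA].
      * intros T HT. in_cases HT; split; auto; intros n.
        -- apply inA_absd; [apply HZ|]. intros w; specialize (HWa n w); lra.
        -- apply inA_absd; [apply HWa|apply canon_inA].
      * intros n w. unfold sumL, canon; simpl. solve_ineq.
    + intros [HZ Heq]. split; auto. exists (canon M p e). split; [|exact Heq].
      apply IH; auto. split; [apply canon_cauchy; auto|apply eqvA_refl; auto].
  - split.
    + intros [HZ [W1 [W2 [HW1 [HW2 Heq]]]]].
      apply IHp in HW1; auto. destruct HW1 as [[HW1a _] HW1e].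
      apply IHq in HW2; auto. destruct HW2 as [[HW2a _] HW2e].
      split; auto.
      apply (small_bound E HE _ [fun n w => Rabs (Z n w - Rmax (W1 n w - W2 n w) 0);
        fun n w => Rabs (W1 n w - canon M p e n w); fun n w => Rabs (W2 n w - canon M q e n w)]).
      * intros n. apply inA_absd; [apply HZ|apply canon_inA].
      * intros T HT. in_cases HT; split; auto; intros n.
        -- apply inA_absd; [apply HZ|]. apply inA_maxd; auto.
        -- apply inA_absd; [apply HW1a|apply canon_inA].
        -- apply inA_absd; [apply HW2a|apply canon_inA].
      * intros n w. unfold sumL, canon; simpl. solve_ineq.
    + intros [HZ Heq]. split; auto. exists (canon M p e), (canon M q e).
      split; [|split; [|exact Heq]].
      * apply IHp; auto. split; [apply canon_cauchy; auto|apply eqvA_refl; auto].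
      * apply IHq; auto. split; [apply canon_cauchy; auto|apply eqvA_refl; auto].
  - apply (sup_abs M E HE (canon M (FSup p) e) (fun b W => Den M E p (scons b e) W)
             (fun b => canon M p (scons b e))).
    + apply canon_cauchy; auto.
    + intros b Hb. apply canon_cauchy; auto. apply cauchyEnv_scons; auto.
    + intros b W Hb. apply IH. apply cauchyEnv_scons; auto.
    + intros b Hb n w.
      change (fval (M w) p (fun k => scons b e k n w) <=
              real (Lub_Rbar (fun r => exists x, r = fval (M w) p (scons x (fun k => e k n w))))).
      rewrite (scons_pt M b e n w).
      destruct (lub_props (M w) (point (M w)) (fun x => fval (M w) p (scons x (fun k => e k n w)))
        (fun x => fval_bounds p (M w) _)) as [H1 _]. apply H1.
    + apply sup_approx; auto.
  - apply (inf_abs M E HE (canon M (FInf p) e) (fun b W => Den M E p (scons b e) W)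
             (fun b => canon M p (scons b e))).
    + apply canon_cauchy; auto.
    + intros b Hb. apply canon_cauchy; auto. apply cauchyEnv_scons; auto.
    + intros b W Hb. apply IH. apply cauchyEnv_scons; auto.
    + intros b Hb n w.
      change (real (Glb_Rbar (fun r => exists x, r = fval (M w) p (scons x (fun k => e k n w))))
              <= fval (M w) p (fun k => scons b e k n w)).
      rewrite (scons_pt M b e n w).
      destruct (glb_props (M w) (point (M w)) (fun x => fval (M w) p (scons x (fun k => e k n w)))
        (fun x => fval_bounds p (M w) _)) as [H1 _]. apply H1.
    + apply inf_approx; auto.
Qed.

Theorem theorem3p19 (L : Sig) (Omega : Type) (M : Omega -> Struct L)
  (E : (Omega -> R) -> R) (HE : integration_functional E) :
  full M /\
  forall (phi : formula L) (a : nat -> Prod M),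
    Den M E phi (fun k _ => a k) (fun _ => bracket M phi a).
Proof.
  split.
  - intros a b X HX.
    exists (fun w => if Req_EM_T (X w) 1 then a w else b w).
    intros w. split; intros Hw; destruct (Req_EM_T (X w) 1); auto; lra.
  - intros phi a.
    assert (He : CauchyEnv M E (fun k _ => a k)).
    { intros k. apply const_cauchy; auto. }
    apply (proj2 (main_lemma M E HE phi _ He _)).
    split.
    + apply (canon_cauchy M E HE phi _ He).
    + apply eqvA_refl; auto.
Qed.
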